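(* Let $K$ be a compact line, $(F_i)_{i\in I}$ a weak*-null family in $\mathrm{NBV}(K)$ with $\mu_i$ the measure associated to $F_i$, $J$ a convex subset of $K$ and $S$ a finite subset of $J$. If $J$ has more than one point then $\sum_{t\in S}|F_i(t)|\le|\mu_i|(J)\mod c_0(I)$, and if $J$ is open then $\sum_{t\in S}|F_i(t)|\le\tfrac12|\mu_i|(J)\mod c_0(I)$.
   Context: A compact line is a totally ordered set which is compact in its order topology. $J\subseteq K$ is convex if $t\le s$ in $J$ implies $[t,s]\subseteq J$. $\mathrm{NBV}(K)$ is the space of right-continuous real maps of bounded variation on $K$; each finite signed regular Borel measure $\mu$ on $K$ corresponds isometrically to $F_\mu(t)=\mu([\min K,t])$, and the measure associated to $F$ is the $\mu$ with $F_\mu=F$; $|\mu|$ is its total variation measure. $c_0(I)$ is the set of real families with $\{i:|a_i|\ge\varepsilon\}$ finite for all $\varepsilon>0$ (written $\lim_{i\in I}a_i=0$). $(F_i)$ is weak*-null if $\lim_i\int_Kf\,d\mu_i=0$ for all $f\in C(K)$. ''$x_i\le y_i\mod c_0(I)$'' means $\{i:x_i\ge y_i+\varepsilon\}$ is finite for every $\varepsilon>0$. *)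

(* Defs.v *)
From HB Require Import structures.
From mathcomp Require Import all_boot all_order all_algebra.
From mathcomp Require Import all_classical all_reals all_analysis.
Set Implicit Arguments. Unset Strict Implicit. Unset Printing Implicit Defensive.
Import Order.TTheory GRing.Theory Num.Theory.
Import numFieldNormedType.Exports.
Local Open Scope classical_set_scope.
Local Open Scope ring_scope.

Section borel_space.
Context {d : Order.disp_t} (K : orderTopologicalType d) (k0 : K).
Definition borelK_pt (k : K) : Type := K.
HB.instance Definition _ := Choice.on (borelK_pt k0).
HB.instance Definition _ := isPointed.Build (borelK_pt k0) k0.
Definition borelK (k : K) := g_sigma_algebraType (@open K : set (set (borelK_pt k))).
End borel_space.

Definition compact_line {d : Order.disp_t} (K : orderTopologicalType d) :=
  compact (@setT K).

Section defs.
Context {d : Order.disp_t} {K : orderTopologicalType d} {k0 : K} {R : realType}.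
Local Notation B := (borelK k0).


Definition convex_subset (J : set K) :=
  forall t s : K, J t -> J s -> (t <= s)%O -> `[t, s]%classic `<=` J.

Definition radon_regular (mu : {measure set B -> \bar R}) :=
  forall A : set B, measurable A ->
    mu A = ereal_sup [set mu C | C in [set C : set B | compact (C : set K) /\ C `<=` A]] /\
    mu A = ereal_inf [set mu U | U in [set U : set B | open (U : set K) /\ A `<=` U]].

Definition sm_val (mp mn : {finite_measure set B -> \bar R}) (A : set B) : R :=
  fine (mp A) - fine (mn A).

Definition tot_var (mp mn : {finite_measure set B -> \bar R}) (A : set B) : \bar R :=
  ereal_sup [set v : \bar R | exists (n : nat) (P : 'I_n -> set B),
                 (forall k, measurable (P k)) /\
                 (forall k l, k != l -> P k `&` P l = set0) /\
                 \bigcup_k P k = A /\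
                 v = (\sum_(k < n) `|sm_val mp mn (P k)|)%:E].

Definition sm_integral (mp mn : {finite_measure set B -> \bar R}) (f : K -> R) : R :=
  fine (\int[mp]_(x in [set: B]) (f x)%:E) - fine (\int[mn]_(x in [set: B]) (f x)%:E).

(** F_mu(t) = mu([min K, t]) ; note [min K, t] = ]-oo, t] *)
Definition F_of_meas (mp mn : {finite_measure set B -> \bar R}) (t : K) : R :=
  sm_val mp mn (`]-oo, t]%classic : set K).

Definition c0_lim0 {I : Type} (a : I -> R) :=
  forall eps : R, 0 < eps -> finite_set [set i | eps <= `|a i|].

Definition le_mod_c0I {I : Type} (x : I -> R) (y : I -> \bar R) :=
  forall eps : R, 0 < eps -> finite_set [set i | (y i + eps%:E <= (x i)%:E)%E].

End defs.

(* Main.v *)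
Require Import Defs.
From HB Require Import structures.
From mathcomp Require Import all_boot all_order all_algebra.
From mathcomp Require Import all_classical all_reals all_analysis.
From mathcomp Require Import measurable_realfun.
From mathcomp Require Import ring lra zify.
Set Implicit Arguments. Unset Strict Implicit. Unset Printing Implicit Defensive.
Import Order.TTheory GRing.Theory Num.Theory.
Import numFieldNormedType.Exports.
Local Open Scope classical_set_scope.
Local Open Scope ring_scope.

Section work1.
Context {R : realType} {d : Order.disp_t} {K : orderTopologicalType d} (k0 : K).
Local Notation B := (borelK k0).

Lemma open_meas (A : set K) : open A -> measurable (A : set B).
Proof. by move=> oA; apply: sub_sigma_algebra. Qed.

Lemma closed_meas (A : set K) : closed A -> measurable (A : set B).
Proof.
move=> cA; rewrite -(setCK A); apply: measurableC; apply: open_meas.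
exact: closed_openC.
Qed.

Lemma cont_meas (f : K -> R) : continuous f -> measurable_fun setT (f : B -> R).
Proof.
move=> /continuousP cf; apply: (measurability _ (RGenOpens.measurableE R)).
move=> _ [_ [a [b ->] <-]]; apply: measurableI => //.
by apply: open_meas; apply: cf; apply: interval_open.
Qed.
End work1.
Section work2.
Context {R : realType} {d : Order.disp_t} {K : orderTopologicalType d} (k0 : K).
Local Notation B := (borelK k0).

Definition wfh (h : K -> R) :=
  measurable_fun setT (h : B -> R) /\ forall x, 0 <= h x <= 1.

Definition Iv (nu : {finite_measure set B -> \bar R}) (D : set K) (h : K -> R) : R :=
  fine (\int[nu]_(x in (D : set B)) (h x)%:E).

Lemma wfh_compl h : wfh h -> wfh (fun x => 1 - h x).
Proof.
move=> [mh h01]; split; first exact: measurable_funB.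
by move=> x; case/andP: (h01 x) => h0 h1; rewrite subr_ge0 h1 gerBl.
Qed.

Section nu.
Variable nu : {finite_measure set B -> \bar R}.

Lemma mfE (h : K -> R) (D : set B) : wfh h -> measurable D ->
  measurable_fun D (fun x : B => (h x)%:E).
Proof.
move=> [mh _] mD; apply/measurable_EFinP.
exact: (measurable_funS measurableT).
Qed.

Lemma finnu (D : set K) : measurable (D : set B) -> nu D \is a fin_num.
Proof. by move=> mD; apply: fin_num_measure. Qed.

Lemma int_le (D : set K) h : measurable (D : set B) -> wfh h ->
  (0 <= \int[nu]_(x in (D : set B)) (h x)%:E <= nu D)%E.
Proof.
move=> mD [mh h01].
have h0 : forall x, (D : set B) x -> (0 <= (h x)%:E)%E.
  by move=> x _; rewrite lee_fin; case/andP: (h01 x).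
apply/andP; split; first exact: integral_ge0.
rewrite -[X in (_ <= X)%E]mul1e -integral_cst//.
apply: (ge0_le_integral _ mD h0 (mfE (conj mh h01) mD)) => //.
by move=> x _; rewrite lee_fin; case/andP: (h01 x).
Qed.

Lemma int_fin (D : set K) h : measurable (D : set B) -> wfh h ->
  (\int[nu]_(x in (D : set B)) (h x)%:E)%E \is a fin_num.
Proof.
move=> mD wh; have /andP[h1 h2] := int_le mD wh.
rewrite ge0_fin_numE//; apply: le_lt_trans h2 _.
by rewrite ltey_eq finnu.
Qed.

Lemma Iv_ge0 (D : set K) h : measurable (D : set B) -> wfh h -> 0 <= Iv nu D h.
Proof. by move=> mD wh; have /andP[h1 _] := int_le mD wh; apply: fine_ge0. Qed.

Lemma Iv_setU (A C : set K) h : measurable (A : set B) -> measurable (C : set B) ->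
  A `&` C = set0 -> wfh h -> Iv nu (A `|` C) h = Iv nu A h + Iv nu C h.
Proof.
move=> mA mC AC wh; rewrite /Iv ge0_integral_setU//.
- by rewrite fineD// int_fin.
- by apply: mfE => //; apply: measurableU.
- by move=> x _; rewrite lee_fin; case/andP: (wh.2 x).
- by rewrite disj_set2E AC.
Qed.

Lemma Iv_cst (D : set K) c : measurable (D : set B) ->
  Iv nu D (fun=> c) = c * fine (nu D).
Proof.
by move=> mD; rewrite /Iv integral_cst// fineM// finnu.
Qed.

Lemma Iv_eqc (D : set K) h c : measurable (D : set B) -> (forall x, D x -> h x = c) ->
  Iv nu D h = c * fine (nu D).
Proof.
move=> mD hc; rewrite -Iv_cst//; congr fine; apply: eq_integral => x.
by rewrite inE => /hc ->.
Qed.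

Lemma Iv_compl (D : set K) h : measurable (D : set B) -> wfh h ->
  Iv nu D (fun x => 1 - h x) = fine (nu D) - Iv nu D h.
Proof.
move=> mD wh.
have wh' := wfh_compl wh.
have e : (\int[nu]_(x in (D : set B)) (1 - h x)%:E + \int[nu]_(x in (D : set B)) (h x)%:E = nu D)%E.
  rewrite -ge0_integralD//.
  - rewrite -[nu D]mul1e -integral_cst//; apply: eq_integral => x _.
    by rewrite -EFinD subrK.
  - by move=> x _; rewrite lee_fin; case/andP: (wh'.2 x).
  - exact: mfE.
  - by move=> x _; rewrite lee_fin; case/andP: (wh.2 x).
  - exact: mfE.
by rewrite /Iv -e (fineD (int_fin mD wh') (int_fin mD wh)) addrK.
Qed.

Lemma Iv_bounds (D : set K) h a b : measurable (D : set B) -> wfh h -> 0 <= a ->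
  (forall x, D x -> a <= h x <= b) ->
  a * fine (nu D) <= Iv nu D h <= b * fine (nu D).
Proof.
move=> mD wh a0 hab; rewrite -!Iv_cst//.
have h0 : forall x, (D : set B) x -> (0 <= (h x)%:E)%E.
  by move=> x _; rewrite lee_fin; case/andP: (wh.2 x).
have a0' : forall x, (D : set B) x -> (0 <= (cst a x)%:E)%E.
  by move=> x _; rewrite lee_fin.
have mc : forall c : R, measurable_fun (D : set B) (fun x : B => (cst c x)%:E).
  by move=> c; apply/measurable_EFinP; exact: measurable_cst.
apply/andP; split; rewrite fine_le//.
- by rewrite integral_cst// fin_numM// finnu.
- exact: (int_fin mD wh).
- apply: (ge0_le_integral _ mD a0' (mc a) (mfE wh mD)) => //.
  by move=> x Dx; rewrite lee_fin; case/andP: (hab x Dx).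
- exact: (int_fin mD wh).
- by rewrite integral_cst// fin_numM// finnu.
- apply: (ge0_le_integral _ mD h0 (mfE wh mD) (mc b)) => //.
  by move=> x Dx; rewrite lee_fin; case/andP: (hab x Dx).
Qed.

End nu.
End work2.
Section work3.
Context {R : realType} {d : Order.disp_t} {K : orderTopologicalType d} (k0 : K).
Local Notation B := (borelK k0).
Variables (mp mn : {finite_measure set B -> \bar R}).

Definition Im (D : set K) (h : K -> R) : R := Iv mp D h - Iv mn D h.
Local Notation mu := (sm_val mp mn).

Lemma sm_setU (A C : set K) : measurable (A : set B) -> measurable (C : set B) ->
  A `&` C = set0 -> mu (A `|` C) = mu A + mu C.
Proof.
move=> mA mC AC; rewrite /sm_val !measureU// !fineD ?finnu//.
by rewrite opprD addrACA.
Qed.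

Lemma Im_setU (A C : set K) h : measurable (A : set B) -> measurable (C : set B) ->
  A `&` C = set0 -> wfh k0 h -> Im (A `|` C) h = Im A h + Im C h.
Proof.
by move=> mA mC AC wh; rewrite /Im !Iv_setU// opprD addrACA.
Qed.

Lemma Im_eqc (D : set K) h c : measurable (D : set B) -> (forall x, D x -> h x = c) ->
  Im D h = c * mu D.
Proof. by move=> mD hc; rewrite /Im !(Iv_eqc _ mD hc) /sm_val mulrBr. Qed.

Lemma Im_compl (D : set K) h : measurable (D : set B) -> wfh k0 h ->
  Im D (fun x => 1 - h x) = mu D - Im D h.
Proof.
move=> mD wh; rewrite /Im !Iv_compl// /sm_val.
by ring.
Qed.

End work3.

Lemma absbound (R : realType) (c e P N x y : R) : 0 <= c <= 1 -> 0 <= e ->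
  0 <= P -> 0 <= N ->
  c * P <= x <= c * P + e * P -> c * N <= y <= c * N + e * N ->
  `|x - y| <= `|P - N| + (e * P + e * N).
Proof.
move=> /andP[c0 c1] e0 P0 N0 /andP[x1 x2] /andP[y1 y2].
have hu : `|c * P - c * N| <= `|P - N|.
  by rewrite -mulrBr normrM ger0_norm// ler_piMl.
move: hu; rewrite !ler_norml => /andP[u1 u2]; apply/andP; split.
  by move: u1 u2 x1 x2 y1 y2; set cP := c * P; set cN := c * N; set eP := e * P;
    set eN := e * N => *; lra.
by move: u1 u2 x1 x2 y1 y2; set cP := c * P; set cN := c * N; set eP := e * P;
    set eN := e * N => *; lra.
Qed.

Section work4.
Context {R : realType} {d : Order.disp_t} {K : orderTopologicalType d} (k0 : K).
Local Notation B := (borelK k0).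

Definition Eset (D : set K) (h : K -> R) (n k : nat) : set K :=
  D `&` (h @^-1` `[k%:R / n%:R, k.+1%:R / n%:R[).

Lemma Eset_meas D h n k : measurable (D : set B) -> wfh k0 h ->
  measurable (Eset D h n k : set B).
Proof.
move=> mD [mh _]; apply: measurableI => //.
by have := mh measurableT _ (measurable_itv `[k%:R / n%:R, k.+1%:R / n%:R[); rewrite setTI.
Qed.

Lemma Eset_bnd D h n k x : Eset D h n k x -> D x /\ k%:R / n%:R <= h x <= k.+1%:R / n%:R.
Proof.
by case=> Dx /=; rewrite in_itv /= => /andP[h1 h2]; split => //; rewrite h1 ltW.
Qed.

Lemma Eset_trunc D h n k x : (0 < n)%N -> Eset D h n k x -> Num.truncn (h x * n%:R) = k.
Proof.
move=> n0 [Dx] /=; rewrite in_itv /= => /andP[h1 h2]; apply: truncn_def.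
have n0' : 0 < n%:R :> R by rewrite ltr0n.
by rewrite -ler_pdivrMr// -ltr_pdivlMr// h1 h2.
Qed.

Lemma Eset_triv D h n : (0 < n)%N -> trivIset setT (fun k => Eset D h n k).
Proof.
move=> n0 k l _ _ [x [Ek El]].
by rewrite -(Eset_trunc n0 Ek) -(Eset_trunc n0 El).
Qed.

Lemma Eset_cover D h n : (0 < n)%N -> wfh k0 h ->
  D = \big[setU/set0]_(k < n.+1) Eset D h n k.
Proof.
move=> n0 [_ h01]; apply/seteqP; split => x.
  move=> Dx; have /andP[hx0 hx1] := h01 x.
  have n0' : 0 < n%:R :> R by rewrite ltr0n.
  have hn0 : 0 <= h x * n%:R by rewrite mulr_ge0// ltW.
  apply: (@bigsetU_sup _ (Num.truncn (h x * n%:R))).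
    rewrite ltnS truncn_le_nat; apply: (le_lt_trans (y := n%:R)).
      by rewrite ler_piMl// ltW.
    by rewrite ltr_nat.
  split => //=; rewrite in_itv /=; have /andP[t1 t2] := truncn_itv hn0.
  by rewrite ler_pdivrMr// ltr_pdivlMr// t1 t2.
rewrite -bigcup_mkord => -[k _] [].
by [].
Qed.

End work4.

Section work5.
Context {R : realType} {d : Order.disp_t} {K : orderTopologicalType d} (k0 : K).
Local Notation B := (borelK k0).

Lemma fine_sumE (I : Type) (s : seq I) (F : I -> \bar R) :
  (forall i, F i \is a fin_num) -> fine (\sum_(i <- s) F i)%E = \sum_(i <- s) fine (F i).
Proof.
move=> Ff; rewrite (eq_bigr (fun i => (fine (F i))%:E)); last by move=> i _; rewrite fineK.
by rewrite sumEFin.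
Qed.

Lemma Iv_sum (nu : {finite_measure set B -> \bar R}) (D : set K) (h : K -> R) n : (0 < n)%N ->
  measurable (D : set B) -> wfh k0 h ->
  Iv nu D h = \sum_(k < n.+1) Iv nu (Eset D h n k) h.
Proof.
move=> n0 mD wh; rewrite /Iv {1}(Eset_cover D n0 wh).
rewrite (@ge0_integral_bigsetU _ _ _ nu _ (fun k : 'I_n.+1 => (Eset D h n k : set B))).
- by rewrite fine_sumE// => k; apply: int_fin => //; exact: (Eset_meas n k mD wh).
- by move=> k; exact: (Eset_meas n k mD wh).
- exact: index_enum_uniq.
- by move=> i j _ _ /(Eset_triv n0 I I) ij; apply: val_inj.
- by apply: mfE => //; rewrite -(Eset_cover D n0 wh).
- by move=> x _; rewrite lee_fin; case/andP: (wh.2 x).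
Qed.

Lemma nu_sum (nu : {finite_measure set B -> \bar R}) (D : set K) (h : K -> R) n : (0 < n)%N ->
  measurable (D : set B) -> wfh k0 h ->
  fine (nu D) = \sum_(k < n.+1) fine (nu (Eset D h n k)).
Proof.
move=> n0 mD wh; rewrite {1}(Eset_cover D n0 wh).
rewrite (@measure_bigsetU _ _ _ nu (fun k => (Eset D h n k : set B))).
- by rewrite fine_sumE// => k; apply: finnu; exact: (Eset_meas n k mD wh).
- by move=> k; exact: (Eset_meas n k mD wh).
- exact: Eset_triv.
Qed.

Variables (mp mn : {finite_measure set B -> \bar R}).
Local Notation mu := (sm_val mp mn).

Lemma approx (D : set K) (h : K -> R) n : measurable (D : set B) -> wfh k0 h -> (0 < n)%N ->
  `|Im mp mn D h| <= \sum_(k < n.+1) `|mu (Eset D h n k)| +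
                     (fine (mp D) + fine (mn D)) / n%:R.
Proof.
move=> mD wh n0; rewrite /Im (Iv_sum _ n0 mD wh) (Iv_sum mn n0 mD wh) -sumrB.
rewrite (nu_sum mp n0 mD wh) (nu_sum mn n0 mD wh) -big_split /= mulr_suml -big_split /=.
apply: (le_trans (ler_norm_sum _ _ _)); apply: ler_sum => k _.
have n0' : 0 < n%:R :> R by rewrite ltr0n.
have mE := Eset_meas n k mD wh.
have bnd : forall nu : {finite_measure set B -> \bar R},
    k%:R / n%:R * fine (nu (Eset D h n k)) <= Iv nu (Eset D h n k) h <=
    k%:R / n%:R * fine (nu (Eset D h n k)) + n%:R^-1 * fine (nu (Eset D h n k)).
  move=> nu.
  have e : k.+1%:R / n%:R * fine (nu (Eset D h n k)) =
     k%:R / n%:R * fine (nu (Eset D h n k)) + n%:R^-1 * fine (nu (Eset D h n k)).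
    by rewrite -natr1 mulrDl mul1r mulrDl.
  rewrite -e; apply: Iv_bounds => //.
  by move=> x /Eset_bnd[_].
rewrite /sm_val.
have -> : (fine (mp (Eset D h n k)) + fine (mn (Eset D h n k))) / n%:R =
  n%:R^-1 * fine (mp (Eset D h n k)) + n%:R^-1 * fine (mn (Eset D h n k)).
  by rewrite mulrC mulrDr.
apply: (absbound (c := k%:R / n%:R)).
- apply/andP; split; first by rewrite divr_ge0.
  by rewrite ler_pdivrMr// mul1r ler_nat -ltnS ltn_ord.
- by rewrite invr_ge0 ltW.
- by apply: fine_ge0; apply: measure_ge0.
- by apply: fine_ge0; apply: measure_ge0.
- exact: bnd.
- exact: bnd.
Qed.

End work5.

Section work6.
Context {R : realType} {d : Order.disp_t} {K : orderTopologicalType d} (k0 : K).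
Local Notation B := (borelK k0).
Variables (mp mn : {finite_measure set B -> \bar R}).
Local Notation mu := (sm_val mp mn).

Lemma Vge (T : finType) (A : set K) (E : T -> set K) : measurable (A : set B) ->
  (forall x, measurable (E x : set B)) -> (forall x, E x `<=` A) ->
  (forall x y, x != y -> E x `&` E y = set0) ->
  ((\sum_(x : T) `|mu (E x)|)%:E <= tot_var mp mn A)%E.
Proof.
move=> mA mE EA Edisj.
pose U := \bigcup_(x in [set: T]) E x.
have mU : measurable (U : set B).
  by apply: fin_bigcup_measurable => //; exact: finite_finset.
pose P (j : 'I_#|T|.+1) : set B :=
  if (insub (val j) : option 'I_#|T|) is Some j' then E (enum_val j') else A `\` U.
have PE (j : 'I_#|T|) : P (widen_ord (leqnSn _) j) = E (enum_val j).
  by rewrite /P /= valK.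
have PN : P ord_max = A `\` U.
  by rewrite /P /= insubN// ltnn.
apply: (@le_trans _ _ (\sum_(k < #|T|.+1) `|mu (P k)|)%:E).
  rewrite lee_fin big_ord_recr /= -[X in X <= _]addr0 lerD//.
  rewrite (big_enum_val (A := T)) /=.
  by apply: ler_sum => j _; rewrite PE.
apply: ereal_sup_ubound; exists #|T|.+1, P; split; [|split; [|split]] => //.
- move=> k; rewrite /P; case: insubP => [j _ _|_] //.
  exact: measurableD.
- move=> k l kl; rewrite /P.
  case: insubP => [j _ ej|nk]; case: insubP => [j' _ ej'|nl].
  + apply: Edisj; apply: contra kl => /eqP /enum_val_inj jj.
    by apply/eqP/val_inj; rewrite -ej -ej' jj.
  + apply/seteqP; split => // x [Ex [_ nU]]; apply: nU; exists (enum_val j) => //.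
  + apply/seteqP; split => // x [[_ nU] Ex]; apply: nU; exists (enum_val j') => //.
  + exfalso; move: nk nl kl; rewrite -!leqNgt => nk nl.
    have ek : val k = #|T| by apply/eqP; rewrite eqn_leq nk -ltnS ltn_ord.
    have el : val l = #|T| by apply/eqP; rewrite eqn_leq nl -ltnS ltn_ord.
    by rewrite (_ : k = l) ?eqxx//; apply: val_inj; rewrite ek el.
- apply/seteqP; split => [x [k _]|x Ax].
    by rewrite /P; case: insubP => [j _ _ /EA|_ []].
  have [[y _ Ey]|nU] := pselect (U x).
    exists (widen_ord (leqnSn _) (enum_rank y)) => //.
    by rewrite PE enum_rankK.
  by exists ord_max => //; rewrite PN.
Qed.

End work6.

Section work7.
Context {R : realType} {d : Order.disp_t} {K : orderTopologicalType d} (k0 : K).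
Local Notation B := (borelK k0).
Variables (mp mn : {finite_measure set B -> \bar R}).
Local Notation mu := (sm_val mp mn).

Lemma comb (T : finType) (A : set K) (D : T -> set K) (h : T -> K -> R) :
  measurable (A : set B) -> (forall x, measurable (D x : set B)) ->
  (forall x, wfh k0 (h x)) -> (forall x, D x `<=` A) ->
  (forall x y, x != y -> D x `&` D y = set0) ->
  ((\sum_(x : T) `|Im mp mn (D x) (h x)|)%:E <= tot_var mp mn A)%E.
Proof.
move=> mA mD wh DA Ddisj.
set S := \sum_(x : T) `|Im mp mn (D x) (h x)|.
set C := \sum_(x : T) (fine (mp (D x)) + fine (mn (D x))).
have C0 : 0 <= C.
  by apply: sumr_ge0 => x _; apply: addr_ge0; apply: fine_ge0; apply: measure_ge0.
have key : forall n, (0 < n)%N -> (S%:E <= tot_var mp mn A + (C / n%:R)%:E)%E.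
  move=> n n0.
  have -> : C / n%:R = \sum_(x : T) (fine (mp (D x)) + fine (mn (D x))) / n%:R.
    by rewrite mulr_suml.
  have le1 : S <= \sum_(x : T) (\sum_(k < n.+1) `|mu (Eset (D x) (h x) n k)|) +
                  \sum_(x : T) (fine (mp (D x)) + fine (mn (D x))) / n%:R.
    rewrite -big_split /=; apply: ler_sum => x _; exact: approx.
  apply: (le_trans (y := ((\sum_(x : T) (\sum_(k < n.+1) `|mu (Eset (D x) (h x) n k)|))%:E +
             (\sum_(x : T) (fine (mp (D x)) + fine (mn (D x))) / n%:R)%:E)%E)).
    by rewrite -EFinD lee_fin.
  apply: leeD2r; rewrite pair_bigA /=.
  apply: (@Vge _ _ _ k0 mp mn _ A (fun p : T * 'I_n.+1 => Eset (D p.1) (h p.1) n p.2)) => //.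
  - by move=> p; apply: Eset_meas.
  - by move=> p x [/DA].
  - move=> [x k] [y l] /=; have [xy|xy] := eqVneq x y.
      subst y => kl; have {kl} kl : k != l by apply: contra kl => /eqP ->.
      apply/seteqP; split => // z [E1 E2].
      have := Eset_triv n0 I I (ex_intro _ z (conj E1 E2)).
      by move/val_inj => kl'; rewrite kl' eqxx in kl.
    move=> _; apply/seteqP; split => // z [[D1 _] [D2 _]].
    by rewrite -(Ddisj _ _ xy); split.
have VNy : tot_var mp mn A != -oo%E.
  apply/negP => /eqP VNy; have := key 1%N isT; rewrite VNy /=.
  by rewrite leNgt ltNye.
move: key VNy; case: (tot_var mp mn A) => [v| |] key _ //; last by rewrite leey.
rewrite lee_fin; apply/ler_addgt0Pr => e e0.
pose n := (Num.truncn (C / e)).+1.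
have n0 : (0 < n)%N by [].
have := key n n0; rewrite -EFinD lee_fin => /le_trans; apply.
rewrite lerD2l ler_pdivrMr ?ltr0n// mulrC -ler_pdivrMr//.
by rewrite ltW// truncnS_gt.
Qed.

End work7.

Section work8.
Context {R : realType} {d : Order.disp_t} {K : orderTopologicalType d} (k0 : K).
Local Notation B := (borelK k0).
Hypothesis Kcl : compact_line K.

Lemma sepK (A C : set K) : closed A -> closed C -> A `&` C = set0 ->
  uniform_separator A C.
Proof.
move=> cA cC AC.
have nK : normal_space K by apply: compact_normal => //; exact: order_hausdorff.
by have /(_ A C cA cC AC) := (normal_separatorP (R := R) (T := K)).1 nK.
Qed.

Definition Ury (t s : K) : K -> R := Urysohn `[s, +oo[ `]-oo, t].

Lemma Ury_cont t s : continuous (Ury t s).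
Proof. exact: Urysohn_continuous. Qed.

Lemma Ury01 t s x : 0 <= Ury t s x <= 1.
Proof.
have := @Urysohn_range K R `[s, +oo[ `]-oo, t] (Ury t s x) (ex_intro2 _ _ x I erefl).
by rewrite /= in_itv.
Qed.

Lemma Ury_disj (t s : K) : (t < s)%O -> `[s, +oo[ `&` `]-oo, t] = set0.
Proof.
move=> ts; apply/seteqP; split => // x [] /=; rewrite !in_itv /= andbT => sx xt.
by have := lt_le_trans ts sx; rewrite ltNge xt.
Qed.

Lemma Ury_left t s x : (t < s)%O -> (x <= t)%O -> Ury t s x = 1.
Proof.
move=> ts xt; have := @Urysohn_sub1 K R `[s, +oo[ `]-oo, t].
move=> /(_ (sepK (@rray_closed _ _ _) (@lray_closed _ _ _) (Ury_disj ts))).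
by apply; exists x => //=; rewrite in_itv /= xt.
Qed.

Lemma Ury_right t s x : (t < s)%O -> (s <= x)%O -> Ury t s x = 0.
Proof.
move=> ts sx; have := @Urysohn_sub0 K R `[s, +oo[ `]-oo, t].
move=> /(_ (sepK (@rray_closed _ _ _) (@lray_closed _ _ _) (Ury_disj ts))).
by apply; exists x => //=; rewrite in_itv /= sx.
Qed.

End work8.

Section work9.
Context {R : realType} {d : Order.disp_t} {K : orderTopologicalType d} (k0 : K).
Local Notation B := (borelK k0).

Lemma m_lray (t : K) : measurable (`]-oo, t] : set B).
Proof. by apply: closed_meas; exact: lray_closed. Qed.
Lemma m_rrayc (t : K) : measurable (`[t, +oo[ : set B).
Proof. by apply: closed_meas; exact: rray_closed. Qed.
Lemma m_rray (t : K) : measurable (`]t, +oo[ : set B).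
Proof. by apply: open_meas; exact: rray_open. Qed.
Lemma m_oo (t s : K) : measurable (`]t, s[ : set B).
Proof. by apply: open_meas; exact: itv_open. Qed.
Lemma m_oc (t s : K) : measurable (`]t, s] : set B).
Proof. by rewrite set_itv_splitI /=; apply: measurableI; [exact: m_rray|exact: m_lray]. Qed.

Lemma GS (mp mn : {finite_measure set B -> \bar R}) (A D C : set K) (f : K -> R) :
  measurable (A : set B) -> measurable (D : set B) -> measurable (C : set B) ->
  A `&` D = set0 -> (A `|` D) `&` C = set0 -> [set: K] = A `|` D `|` C ->
  wfh k0 f -> (forall x, A x -> f x = 1) -> (forall x, C x -> f x = 0) ->
  sm_integral mp mn f = sm_val mp mn A + Im mp mn D f.
Proof.
move=> mA mD mC AD ADC eT wf f1 f0.
have e : forall nu : {finite_measure set B -> \bar R},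
    fine (\int[nu]_(x in [set: B]) (f x)%:E) = fine (nu A) + Iv nu D f.
  move=> nu; change (Iv nu [set: K] f = fine (nu A) + Iv nu D f).
  rewrite eT !Iv_setU//; last exact: measurableU.
  by rewrite (Iv_eqc _ mA f1) (Iv_eqc _ mC f0) mul1r mul0r addr0.
by rewrite /sm_integral !e /sm_val /Im; ring.
Qed.

Lemma split_R (t s : K) : (t < s)%O ->
  [set: K] = `]-oo, t]%classic `|` `]t, s[%classic `|` `[s, +oo[%classic.
Proof.
move=> ts; apply/seteqP; split => x // _.
have [xt|tx] := leP x t; first by left; left; rewrite /= ?in_itv /= xt.
have [xs|sx] := ltP x s; first by left; right; rewrite /= ?in_itv /= tx xs.
by right; rewrite /= ?in_itv /= sx.
Qed.

Lemma split_L (u t : K) :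
  [set: K] = `]-oo, u]%classic `|` `]u, t]%classic `|` `]t, +oo[%classic.
Proof.
apply/seteqP; split => x // _.
have [xu|ux] := leP x u; first by left; left; rewrite /= ?in_itv /= xu.
have [xt|tx] := leP x t; first by left; right; rewrite /= ?in_itv /= ux xt.
by right; rewrite /= ?in_itv /= tx.
Qed.

Lemma split_Rinf (t : K) : [set: K] = `]-oo, t]%classic `|` `]t, +oo[%classic `|` set0.
Proof.
rewrite setU0; apply/seteqP; split => x // _.
have [xt|tx] := leP x t; first by left; rewrite /= ?in_itv /= xt.
by right; rewrite /= ?in_itv /= tx.
Qed.

Lemma split_lray (u t : K) : (u <= t)%O -> `]-oo, t]%classic = `]-oo, u]%classic `|` `]u, t]%classic.
Proof.
move=> ut; apply/seteqP; split => x /=; rewrite !in_itv /=.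
  by move=> xt; have [xu|ux] := leP x u; [left|right]; rewrite /= ?in_itv /= ?xu ?ux ?xt.
case; rewrite /= ?in_itv /=; first by move=> xu; apply: le_trans ut.
by case/andP.
Qed.

Lemma disj_lo (a b c : K) (x : K) : `]-oo, a]%classic x -> `]b, c]%classic x -> (b < a)%O.
Proof. by rewrite /= !in_itv /= => xa /andP[bx _]; apply: lt_le_trans xa. Qed.

End work9.

Section work10.
Context {R : realType} {d : Order.disp_t} {K : orderTopologicalType d} (k0 : K).
Local Notation B := (borelK k0).
Hypothesis Kcl : compact_line K.
Local Notation Ury := (@Ury R d K).

Definition piece := (set K * (K -> R) * (K -> R))%type.
Definition pD (p : piece) := p.1.1.
Definition ph (p : piece) := p.1.2.
Definition pf (p : piece) := p.2.
Definition pwf (p : piece) :=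
  measurable (pD p : set B) /\ wfh k0 (ph p) /\ continuous (pf p).
Definition good (t : K) (p : piece) := forall mp mn : {finite_measure set B -> \bar R},
  `|F_of_meas mp mn t| <= `|sm_integral mp mn (pf p)| + `|Im mp mn (pD p) (ph p)|.

Definition pieceR (t s : K) : piece := (`]t, s[%classic, Ury t s, Ury t s).
Definition pieceRinf (t : K) : piece := (`]t, +oo[%classic, fun=> 1, fun=> 1).
Definition pieceL (u t : K) : piece := (`]u, t]%classic, fun x => 1 - Ury u t x, Ury u t).
Definition pieceLinf (t : K) : piece := (`]-oo, t]%classic, fun=> 1, fun=> 0).

Lemma wfh_Ury t s : wfh k0 (Ury t s).
Proof. by split; [apply: cont_meas; exact: Ury_cont|move=> x; exact: Ury01]. Qed.

Lemma wfh1 : wfh k0 (fun _ : K => (1 : R)).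
Proof. by split => // x; rewrite lexx ler01. Qed.

Lemma pieceR_wf t s : pwf (pieceR t s).
Proof. by split; [exact: m_oo|split; [exact: wfh_Ury|exact: Ury_cont]]. Qed.
Lemma pieceRinf_wf t : pwf (pieceRinf t).
Proof. by split; [exact: m_rray|split; [exact: wfh1|move=> x; exact: cvg_cst]]. Qed.
Lemma pieceL_wf u t : pwf (pieceL u t).
Proof. by split; [exact: m_oc|split; [exact/wfh_compl/wfh_Ury|exact: Ury_cont]]. Qed.
Lemma pieceLinf_wf t : pwf (pieceLinf t).
Proof. by split; [exact: m_lray|split; [exact: wfh1|move=> x; exact: cvg_cst]]. Qed.

Lemma goodE t p (mp mn : {finite_measure set B -> \bar R}) a b :
  F_of_meas mp mn t = a * sm_integral mp mn (pf p) + b * Im mp mn (pD p) (ph p) ->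
  `|a| <= 1 -> `|b| <= 1 ->
  `|F_of_meas mp mn t| <= `|sm_integral mp mn (pf p)| + `|Im mp mn (pD p) (ph p)|.
Proof.
move=> -> a1 b1; apply: (le_trans (ler_normD _ _)); rewrite !normrM.
by apply: lerD; rewrite ler_piMl.
Qed.

Lemma pieceR_good t s : (t < s)%O -> good t (pieceR t s).
Proof.
move=> ts mp mn; apply: (@goodE _ _ _ _ 1 (-1)); last 2 first.
- by rewrite normr1.
- by rewrite normrN normr1.
have e : sm_integral mp mn (Ury t s) =
    sm_val mp mn `]-oo, t]%classic + Im mp mn `]t, s[%classic (Ury t s).
  apply: (@GS _ _ _ k0 mp mn _ _ `[s, +oo[%classic).
  - exact: m_lray.
  - exact: m_oo.
  - exact: m_rrayc.
  - apply/seteqP; split => // x []; rewrite /= !in_itv /= => xt /andP[tx _].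
    by have := lt_le_trans tx xt; rewrite ltxx.
  - apply/seteqP; split => // x [[]]; rewrite /= !in_itv /= ?andbT.
      by move=> xt sx; have := lt_le_trans ts sx; rewrite ltNge xt.
    by move=> /andP[_ xs] sx; have := lt_le_trans xs sx; rewrite ltxx.
  - exact: split_R.
  - exact: wfh_Ury.
  - by move=> x; rewrite /= in_itv /= => xt; exact: (Ury_left Kcl).
  - by move=> x; rewrite /= in_itv /= andbT => sx; exact: (Ury_right Kcl).
by rewrite /pf /pD /ph /= e /F_of_meas; ring.
Qed.

Lemma pieceRinf_good t : good t (pieceRinf t).
Proof.
move=> mp mn; apply: (@goodE _ _ _ _ 1 (-1)); last 2 first.
- by rewrite normr1.
- by rewrite normrN normr1.
have e : sm_integral mp mn (fun=> 1) =
    sm_val mp mn `]-oo, t]%classic + Im mp mn `]t, +oo[%classic (fun=> 1).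
  apply: (@GS _ _ _ k0 mp mn _ _ set0).
  - exact: m_lray.
  - exact: m_rray.
  - exact: measurable0.
  - apply/seteqP; split => // x []; rewrite /= !in_itv /= andbT => xt tx.
    by have := lt_le_trans tx xt; rewrite ltxx.
  - by rewrite setI0.
  - exact: split_Rinf.
  - exact: wfh1.
  - by [].
  - by [].
by rewrite /pf /pD /ph /= e /F_of_meas; ring.
Qed.

Lemma pieceL_good u t : (u < t)%O -> good t (pieceL u t).
Proof.
move=> ut mp mn; apply: (@goodE _ _ _ _ 1 1); last 2 first.
- by rewrite normr1.
- by rewrite normr1.
have e : sm_integral mp mn (Ury u t) =
    sm_val mp mn `]-oo, u]%classic + Im mp mn `]u, t]%classic (Ury u t).
  apply: (@GS _ _ _ k0 mp mn _ _ `]t, +oo[%classic).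
  - exact: m_lray.
  - exact: m_oc.
  - exact: m_rray.
  - apply/seteqP; split => // x []; rewrite /= !in_itv /= => xu /andP[ux _].
    by have := lt_le_trans ux xu; rewrite ltxx.
  - apply/seteqP; split => // x [[]]; rewrite /= !in_itv /= ?andbT.
      by move=> xu tx; have := lt_trans ut tx; rewrite ltNge xu.
    by move=> /andP[_ xt] tx; have := lt_le_trans tx xt; rewrite ltxx.
  - exact: split_L.
  - exact: wfh_Ury.
  - by move=> x; rewrite /= in_itv /= => xu; exact: (Ury_left Kcl).
  - by move=> x; rewrite /= in_itv /= andbT => tx; apply: (Ury_right Kcl) => //; exact: ltW.
have e2 : F_of_meas mp mn t = sm_val mp mn `]-oo, u]%classic + sm_val mp mn `]u, t]%classic.
  rewrite /F_of_meas (split_lray (ltW ut)) sm_setU//.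
  - exact: m_lray.
  - exact: m_oc.
  - apply/seteqP; split => // x []; rewrite /= !in_itv /= => xu /andP[ux _].
    by have := lt_le_trans ux xu; rewrite ltxx.
rewrite e2 /pf /pD /ph /= Im_compl.
- by rewrite e; ring.
- exact: m_oc.
- exact: wfh_Ury.
Qed.

Lemma pieceLinf_good t : good t (pieceLinf t).
Proof.
move=> mp mn; apply: (@goodE _ _ _ _ 0 1); last 2 first.
- by rewrite normr0.
- by rewrite normr1.
rewrite /pf /pD /ph /= (@Im_eqc _ _ _ k0 mp mn _ _ 1).
- by rewrite /F_of_meas; ring.
- exact: m_lray.
- by [].
Qed.

End work10.

Section work11.
Context {d : Order.disp_t} {K : orderTopologicalType d} (k0 : K).
Local Notation B := (borelK k0).

Lemma subsing_meas (A : set K) : (forall x y, A x -> A y -> x = y) ->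
  measurable (A : set B).
Proof.
move=> Au; have [[x Ax]|nA] := pselect (exists x, A x); last first.
  have -> : (A : set B) = set0 by apply/seteqP; split => // y Ay; apply: nA; exists y.
  exact: measurable0.
have -> : A = `[x, x]%classic.
  apply/seteqP; split => y /=.
    by move=> Ay; rewrite (Au _ _ Ay Ax) in_itv /= lexx.
  by rewrite in_itv /= => /andP[xy yx]; have -> : y = x by apply/le_anti; rewrite xy yx.
by apply: closed_meas; exact: itv_closed.
Qed.

Lemma conv_meas (J : set K) : convex_subset J -> measurable (J : set B).
Proof.
move=> Jc.
pose E := closure J `\` J.
pose EU := E `&` [set x | forall y, J y -> (y < x)%O].
pose EL := E `&` [set x | forall y, J y -> (x < y)%O].
have Eside : E `<=` EU `|` EL.
  move=> x [cx nJx]; have [H|H] := pselect (forall y, J y -> (y < x)%O).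
    by left.
  right; split => // y Jy; rewrite ltNge; apply/negP => yx.
  move/existsNP: H => [y1 /not_implyP [Jy1 /negP]]; rewrite -leNgt => xy1.
  by apply: nJx; apply: (Jc y y1) => //; [exact: le_trans xy1|rewrite /= in_itv /= yx xy1].
have mEU : measurable (EU : set B).
  apply: subsing_meas => x x' [[cx _] ux] [[cx' _] ux'].
  have [xx'|x'x|//] := ltgtP x x'.
    have nb : nbhs x' `]x, +oo[%classic.
      by apply: open_nbhs_nbhs; split; [exact: rray_open|rewrite /= in_itv /= andbT].
    have [y [Jy xy]] := cx' _ nb.
    by move: xy; rewrite /= in_itv /= andbT => /lt_trans/(_ (ux _ Jy)); rewrite ltxx.
  have nb : nbhs x `]x', +oo[%classic.
    by apply: open_nbhs_nbhs; split; [exact: rray_open|rewrite /= in_itv /= andbT].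
  have [y [Jy xy]] := cx _ nb.
  by move: xy; rewrite /= in_itv /= andbT => /lt_trans/(_ (ux' _ Jy)); rewrite ltxx.
have mEL : measurable (EL : set B).
  apply: subsing_meas => x x' [[cx _] ux] [[cx' _] ux'].
  have [xx'|x'x|//] := ltgtP x x'.
    have nb : nbhs x `]-oo, x'[%classic.
      by apply: open_nbhs_nbhs; split; [exact: lray_open|rewrite /= in_itv /= xx'].
    have [y [Jy xy]] := cx _ nb.
    by move: xy; rewrite /= in_itv /= => /(lt_trans (ux' _ Jy)); rewrite ltxx.
  have nb : nbhs x' `]-oo, x[%classic.
    by apply: open_nbhs_nbhs; split; [exact: lray_open|rewrite /= in_itv /= x'x].
  have [y [Jy xy]] := cx' _ nb.
  by move: xy; rewrite /= in_itv /= => /(lt_trans (ux _ Jy)); rewrite ltxx.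
have -> : J = closure J `\` (EU `|` EL).
  apply/seteqP; split => x.
    move=> Jx; split; first exact: subset_closure.
    by case=> -[[_ nJ] _].
  move=> [cx nE]; apply: contrapT => nJx; apply: nE; exact: Eside.
apply: measurableD; last exact: measurableU.
by apply: closed_meas; exact: closed_closure.
Qed.

End work11.

Section work12.
Context {d : Order.disp_t} {K : orderTopologicalType d}.

Lemma open_itv_nbhs (J : set K) t : open J -> J t ->
  exists i : interval K, [/\ itv_open_ends i, t \in i & [set` i] `<=` J].
Proof.
move=> oJ Jt; have : nbhs t J by apply: open_nbhs_nbhs.
by rewrite itv_nbhsE => -[i [oi ti] iJ]; exists i.
Qed.

Lemma open_lower (J : set K) t : open J -> J t ->
  (exists a, (a < t)%O /\ `]a, t]%classic `<=` J) \/ `]-oo, t]%classic `<=` J.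
Proof.
move=> oJ Jt; have [[l r] [oi ti iJ]] := open_itv_nbhs oJ Jt.
have sub : forall x, (x <= t)%O -> (l <= BLeft x)%O -> J x.
  move=> x xt lx; apply: iJ; rewrite /= itv_boundlr lx /=.
  move: ti; rewrite itv_boundlr => /andP[_]; apply: le_trans; by rewrite bnd_simp.
move: ti; rewrite itv_boundlr => /andP[lt _].
case: l oi lt sub iJ => [[] a|[]] oi lt sub iJ.
- by move: oi; case: r {iJ} => [[] ?|[]].
- left; exists a; split; first by move: lt; rewrite bnd_simp.
  by move=> x; rewrite /= in_itv /= => /andP[ax xt]; apply: sub => //; rewrite bnd_simp.
- by right => x; rewrite /= in_itv /= => xt; apply: sub.
- by move: lt; rewrite bnd_simp.
Qed.

Lemma open_upper (J : set K) t : open J -> J t ->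
  (exists b, (t < b)%O /\ `]t, b[%classic `<=` J) \/ `]t, +oo[%classic `<=` J.
Proof.
move=> oJ Jt; have [[l r] [oi ti iJ]] := open_itv_nbhs oJ Jt.
have sub : forall x, (t <= x)%O -> (BRight x <= r)%O -> J x.
  move=> x tx xr; apply: iJ; rewrite /= itv_boundlr xr andbT.
  move: ti; rewrite itv_boundlr => /andP[+ _] => /le_trans; apply; by rewrite bnd_simp.
move: ti; rewrite itv_boundlr => /andP[_ rt].
case: r oi rt sub iJ => [[] b|[]] oi rt sub iJ.
- left; exists b; split; first by move: rt; rewrite bnd_simp.
  by move=> x; rewrite /= in_itv /= => /andP[tx xb]; apply: sub; [exact: ltW|rewrite bnd_simp].
- by move: oi; case: l {iJ} => [[] ?|[]].
- by move: rt; rewrite bnd_simp.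
- by right => x; rewrite /= in_itv /= andbT => tx; apply: sub; [exact: ltW|].
Qed.

End work12.

Lemma finish {R : realType} (I : Type) (x : I -> R) (V : I -> \bar R) (T : finType)
  (g : T -> I -> R) : (forall j, c0_lim0 (g j)) ->
  (forall i, ((x i)%:E <= V i + (\sum_(j : T) `|g j i|)%:E)%E) -> le_mod_c0I x V.
Proof.
move=> g0 H eps e0.
pose c := eps / (#|T|%:R + 1).
have N0 : 0 < #|T|%:R + 1 :> R by rewrite ltr_wpDl// ler0n.
have c0 : 0 < c by rewrite divr_gt0.
apply: (@sub_finite_set _ _ (\bigcup_(j in [set: T]) [set i | c <= `|g j i|])).
  move=> i /= Vi; have := H i; case: (V i) Vi => [v| |] Vi Hi; last 2 first.
  - by move: Vi; rewrite leNgt ltey.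
  - by move: Hi; rewrite /= leNgt ltNye.
  move: Vi Hi; rewrite -!EFinD !lee_fin => Vi Hi.
  have eG : eps <= \sum_(j : T) `|g j i| by lra.
  apply: contrapT => nj.
  have lt : forall j : T, `|g j i| < c.
    by move=> j; rewrite ltNge; apply/negP => cj; apply: nj; exists j.
  have : \sum_(j : T) `|g j i| <= \sum_(j : T) c by apply: ler_sum => j _; exact: ltW.
  rewrite sumr_const -mulr_natl => h2.
  have : #|T|%:R * c < eps.
    by rewrite /c mulrA ltr_pdivrMr//; nra.
  lra.
apply: bigcup_finite; first exact: finite_finset.
by move=> j _; exact: g0.
Qed.

Section work13.
Context {R : realType} {d : Order.disp_t} {K : orderTopologicalType d} (k0 : K).
Local Notation B := (borelK k0).

Lemma assemble (I : Type) (mp mn : I -> {finite_measure set B -> \bar R})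
  (wnull : forall f : K -> R, continuous f ->
     c0_lim0 (fun i => sm_integral (mp i) (mn i) f))
  (J : set K) (S : seq K) (c : R) (T : finType) (P : T -> @piece R d K) :
  0 < c -> measurable (J : set B) -> (forall x, pwf k0 (P x)) ->
  (forall x, pD (P x) `<=` J) ->
  (forall x y, x != y -> pD (P x) `&` pD (P y) = set0) ->
  (forall i, c * \sum_(t <- S) `|F_of_meas (mp i) (mn i) t| <=
     \sum_(x : T) (`|sm_integral (mp i) (mn i) (pf (P x))| +
                   `|Im (mp i) (mn i) (pD (P x)) (ph (P x))|)) ->
  le_mod_c0I (fun i => \sum_(t <- S) `|F_of_meas (mp i) (mn i) t|)
             (fun i => (c^-1%:E * tot_var (mp i) (mn i) J)%E).
Proof.
move=> c0 mJ wf PJ Pdisj H.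
apply: (@finish _ _ _ _ T (fun x i => c^-1 * sm_integral (mp i) (mn i) (pf (P x)))).
  move=> x eps e0.
  have [_ [_ cf]] := wf x.
  have := wnull _ cf (eps * c) (mulr_gt0 e0 c0).
  apply: sub_finite_set => i /=.
  by rewrite normrM gtr0_norm ?invr_gt0// mulrC ler_pdivlMr.
move=> i.
have hc := @comb _ _ _ k0 (mp i) (mn i) T J (fun x => pD (P x)) (fun x => ph (P x)) mJ
  (fun x => (wf x).1) (fun x => (wf x).2.1) PJ Pdisj.
have hi := H i.
move: hc; case: (tot_var (mp i) (mn i) J) => [v| |] hc; last 2 first.
- by rewrite mulry gtr0_sg ?invr_gt0// mul1e addye// leey.
- by move: hc; rewrite leNgt ltNye.
move: hc; rewrite -EFinM -EFinD !lee_fin => hc.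
rewrite (_ : \sum_(j : T) `|c^-1 * sm_integral (mp i) (mn i) (pf (P j))| =
             c^-1 * \sum_(j : T) `|sm_integral (mp i) (mn i) (pf (P j))|); last first.
  by rewrite mulr_sumr; apply: eq_bigr => j _; rewrite normrM gtr0_norm ?invr_gt0.
rewrite -mulrDr -(ler_pM2l c0) mulrA mulfV ?lt0r_neq0// mul1r.
move: hi; rewrite big_split /=.
set X := \sum_(t <- S) _; set Y := \sum_(j : T) `|sm_integral _ _ _|.
set Z := \sum_(j : T) `|Im _ _ _ _|.
move: hc; rewrite -/Z => hc hi.
lra.
Qed.

End work13.

Section family.
Context {R : realType} {d : Order.disp_t} {K : orderTopologicalType d} (k0 : K).
Hypothesis Kcl : compact_line K.
Variables (m : nat) (s : nat -> K) (U : nat -> K * K) (BL BR : @piece R d K).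

Definition lft k := if k is k'.+1 then pieceL (U k').1 (s k) else BL.
Definition rgt k := if (k.+1 < m)%N then pieceR (s k) (U k).2 else BR.
Definition fam (kb : nat * bool) := if kb.2 then lft kb.1 else rgt kb.1.

Hypothesis s_lt : forall i j, (i < j)%N -> (j < m)%N -> (s i < s j)%O.
Hypothesis U_ok : forall k, (k.+1 < m)%N ->
  [/\ (s k <= (U k).1)%O, ((U k).2 <= s k.+1)%O, (s k < (U k).2)%O,
      ((U k).1 < s k.+1)%O & forall x, ~ ((U k).1 < x < (U k).2)%O].
Hypothesis BL_reg : forall x, pD BL x -> (x <= s 0)%O.
Hypothesis BR_reg : forall x, pD BR x -> (s m.-1 < x)%O.

Lemma s_le i j : (i <= j)%N -> (j < m)%N -> (s i <= s j)%O.
Proof.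
rewrite leq_eqVlt => /orP[/eqP -> //|ij] jm; exact/ltW/s_lt.
Qed.

Lemma Lreg k x : (k < m)%N -> pD (lft k) x ->
  (x <= s k)%O /\ ((0 < k)%N -> (s k.-1 < x)%O).
Proof.
case: k => [|k] km; first by move=> /BL_reg.
have [u1 _ _ _ _] := U_ok km.
by rewrite /lft /pD /= in_itv /= => /andP[ux xs]; split => // _; apply: le_lt_trans ux.
Qed.

Lemma Rreg k x : (k < m)%N -> pD (rgt k) x ->
  (s k < x)%O /\ ((k.+1 < m)%N -> (x < s k.+1)%O).
Proof.
move=> km; rewrite /rgt; case: ifPn => km1.
  have [_ u2 _ _ _] := U_ok km1.
  by rewrite /pD /= in_itv /= => /andP[sx xu]; split => // _; apply: lt_le_trans u2.
move=> /BR_reg; have -> : m.-1 = k.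
  by move: km km1; rewrite -leqNgt; lia.
by move=> ->; split => // h; rewrite h in km1.
Qed.

Lemma cutP k x : (k.+1 < m)%N -> pD (rgt k) x -> pD (lft k.+1) x -> False.
Proof.
move=> km; rewrite /rgt km /lft /pD /= !in_itv /= => /andP[_ xu] /andP[ux _].
by have [_ _ _ _ H] := U_ok km; apply: (H x); rewrite ux xu.
Qed.

Lemma contra3 (a x b : K) : (a < x)%O -> (x <= b)%O -> (b <= a)%O -> False.
Proof. by move=> ax xb ba; have := lt_le_trans ax (le_trans xb ba); rewrite ltxx. Qed.

Lemma LR k l x : (k < m)%N -> (l < m)%N -> pD (lft k) x -> pD (rgt l) x -> False.
Proof.
move=> km lm h1 h2; have [xk kx] := Lreg km h1; have [lx xl] := Rreg lm h2.
have [kl|lk] := leqP k l; first exact: (contra3 lx xk (s_le kl lm)).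
have l1m : (l.+1 < m)%N by apply: leq_ltn_trans km.
have := xl l1m; rewrite leq_eqVlt in lk; case/orP: lk => [/eqP lk|lk].
  by subst k; move=> _; exact: (@cutP l x l1m h2 h1).
move=> xl1; have k0' : (0 < k)%N by apply: leq_trans lk.
apply: (contra3 (kx k0') (ltW xl1)); apply: s_le.
  by rewrite -ltnS prednK.
by rewrite (leq_ltn_trans (leq_pred k)).
Qed.

Lemma fam_disj kb kb' : (kb.1 < m)%N -> (kb'.1 < m)%N -> kb != kb' ->
  pD (fam kb) `&` pD (fam kb') = set0.
Proof.
case: kb => k b; case: kb' => l b' /= km lm kbl.
apply/seteqP; split => // x [h1 h2]; exfalso.
case: b b' h1 h2 kbl => [] [] h1 h2 kbl /=.
- have kl : k != l by apply: contra kbl => /eqP ->.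
  move: h1 h2 => /(Lreg km)[xk kx] /(Lreg lm)[xl lx].
  have [klt|lkt] := ltnP k l.
    apply: (contra3 (lx (leq_ltn_trans (leq0n _) klt)) xk); apply: s_le => //.
      by rewrite -ltnS prednK// (leq_ltn_trans (leq0n _) klt).
    by rewrite (leq_ltn_trans (leq_pred l)).
  have lk : (l < k)%N by rewrite ltn_neqAle eq_sym kl lkt.
  apply: (contra3 (kx (leq_ltn_trans (leq0n _) lk)) xl); apply: s_le => //.
    by rewrite -ltnS prednK// (leq_ltn_trans (leq0n _) lk).
  by rewrite (leq_ltn_trans (leq_pred k)).
- exact: (LR km lm h1 h2).
- exact: (LR lm km h2 h1).
- have kl : k != l by apply: contra kbl => /eqP ->.
  move: h1 h2 => /(Rreg km)[kx xk] /(Rreg lm)[lx xl].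
  have [klt|lkt] := ltnP k l.
    have k1m : (k.+1 < m)%N by apply: leq_ltn_trans lm.
    exact: (contra3 lx (ltW (xk k1m)) (s_le klt lm)).
  have lk : (l < k)%N by rewrite ltn_neqAle eq_sym kl lkt.
  have l1m : (l.+1 < m)%N by apply: leq_ltn_trans km.
  exact: (contra3 kx (ltW (xl l1m)) (s_le lk km)).
Qed.

Lemma lft_ok k : (0 < k)%N -> (k < m)%N ->
  [/\ good k0 (s k) (lft k), pwf k0 (lft k) & pD (lft k) `<=` `[s k.-1, s k]%classic].
Proof.
case: k => // k _ km; have [u1 _ _ u4 _] := U_ok km; split.
- exact: (pieceL_good Kcl u4).
- exact: pieceL_wf.
- move=> x; rewrite /lft /pD /= !in_itv /= => /andP[ux ->]; rewrite andbT.
  exact/ltW/(le_lt_trans u1 ux).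
Qed.

Lemma rgt_ok k : (k.+1 < m)%N ->
  [/\ good k0 (s k) (rgt k), pwf k0 (rgt k) & pD (rgt k) `<=` `[s k, s k.+1]%classic].
Proof.
move=> km; have [_ u2 u3 _ _] := U_ok km; rewrite /rgt km; split.
- exact: (pieceR_good Kcl u3).
- exact: pieceR_wf.
- move=> x; rewrite /pD /= !in_itv /= => /andP[sx xu].
  by rewrite (ltW sx) (ltW (lt_le_trans xu u2)).
Qed.

End family.

Unset Implicit Arguments.

Theorem proposition2p14 (R : realType) (d : Order.disp_t)
  (K : orderTopologicalType d) (k0 : K) (Kcl : compact_line K)
  (I : Type)
  (mp mn : I -> {finite_measure set (borelK k0) -> \bar R})
  (mp_reg : forall i, radon_regular (mp i))
  (mn_reg : forall i, radon_regular (mn i))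
  (wnull : forall f : K -> R, continuous f ->
     c0_lim0 (fun i => sm_integral (mp i) (mn i) f))
  (J : set K) (Jconv : convex_subset J)
  (S : seq K) (Suniq : uniq S) (SJ : forall t, t \in S -> J t) :
  ((exists t s, J t /\ J s /\ t <> s) ->
     le_mod_c0I (fun i => \sum_(t <- S) `|F_of_meas (mp i) (mn i) t|)
               (fun i => tot_var (mp i) (mn i) J)) /\
  (open J ->
     le_mod_c0I (fun i => \sum_(t <- S) `|F_of_meas (mp i) (mn i) t|)
               (fun i => (2^-1%:E * tot_var (mp i) (mn i) J)%E)).
Proof.
have mJ : measurable (J : set (borelK k0)) := @conv_meas d K k0 J Jconv.
pose S' := sort <=%O S.
have pS : perm_eq S' S by rewrite perm_sort perm_refl.
have sS : sorted <%O S' by rewrite sort_lt_sorted.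
pose m := size S'.
pose s k := nth k0 S' k.
have s_lt : forall i j, (i < j)%N -> (j < m)%N -> (s i < s j)%O.
  move=> i j ij jm; apply: (sorted_ltn_nth (@lt_trans _ K) k0 sS) => //.
  by rewrite inE; apply: ltn_trans ij jm.
have sJ : forall k, (k < m)%N -> J (s k).
  by move=> k km; apply: SJ; rewrite -(perm_mem pS); exact: mem_nth.
have sumE : forall G : K -> R, \sum_(t <- S) G t = \sum_(k < m) G (s k).
  by move=> G; rewrite -(perm_big _ pS) (big_nth k0) big_mkord.
have [U HU] : {U : nat -> K * K & forall k, (k.+1 < m)%N ->
  [/\ (s k <= (U k).1)%O, ((U k).2 <= s k.+1)%O, (s k < (U k).2)%O,
      ((U k).1 < s k.+1)%O & forall x, ~ ((U k).1 < x < (U k).2)%O]}.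
  apply: (@choice _ _ (fun k (p : K * K) => (k.+1 < m)%N ->
    [/\ (s k <= p.1)%O, (p.2 <= s k.+1)%O, (s k < p.2)%O,
        (p.1 < s k.+1)%O & forall x, ~ (p.1 < x < p.2)%O])) => k.
  have [km|km] := boolP (k.+1 < m)%N; last by exists (k0, k0).
  have ss := s_lt k k.+1 (ltnSn k) km.
  have [[c /andP[c1 c2]]|nc] := pselect (exists c, (s k < c < s k.+1)%O).
    exists (c, c) => _ /=; split => //; [exact: ltW|exact: ltW|].
    by move=> x /andP[cx xc]; have := lt_trans cx xc; rewrite ltxx.
  exists (s k, s k.+1) => _ /=; split => //.
  by move=> x H; apply: nc; exists x.
have cvx : forall a b, J a -> J b -> `[a, b]%classic `<=` J.
  move=> a b Ja Jb x; rewrite /= in_itv /= => /andP[ax xb].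
  by apply: (Jconv a b Ja Jb (le_trans ax xb)); rewrite /= in_itv /= ax xb.
pose ok t (p : @piece R d K) := [/\ good k0 t p, pwf k0 p & pD p `<=` J].
have okE : forall (T : finType) (P : T -> @piece R d K) (tt : T -> K) i,
    (forall x, ok (tt x) (P x)) ->
    \sum_(x : T) `|F_of_meas (mp i) (mn i) (tt x)| <=
    \sum_(x : T) (`|sm_integral (mp i) (mn i) (pf (P x))| +
                   `|Im (mp i) (mn i) (pD (P x)) (ph (P x))|).
  by move=> T P tt i okP; apply: ler_sum => x _; have [g _ _] := okP x; exact: g.
split.
  move=> [t1 [t2 [Jt1 [Jt2 t12]]]].
  have [BL [BLreg BLok]] : exists BL : @piece R d K, (forall x, pD BL x -> (x <= s 0)%O) /\
      ((exists a, J a /\ (a < s 0)%O) -> (0 < m)%N -> ok (s 0) BL).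
    have [[a [Ja a0]]|na] := pselect (exists a, J a /\ (a < s 0)%O).
      exists (pieceL a (s 0)); split.
        by move=> x; rewrite /pD /= in_itv /= => /andP[].
      move=> _ m0; split; [exact: (pieceL_good Kcl a0)|exact: pieceL_wf|].
      move=> x; rewrite /pD /= in_itv /= => /andP[ax xs]; apply: (cvx a (s 0)) => //.
        exact: sJ.
      by rewrite /= in_itv /= (ltW ax) xs.
    exists (pieceLinf (s 0)); split.
      by move=> x; rewrite /pD /= in_itv /=.
    by move=> /na.
  have [BR [BRreg BRok]] : exists BR : @piece R d K, (forall x, pD BR x -> (s m.-1 < x)%O) /\
      ((exists b, J b /\ (s m.-1 < b)%O) -> (0 < m)%N -> ok (s m.-1) BR).
    have [[b [Jb b0]]|nb] := pselect (exists b, J b /\ (s m.-1 < b)%O).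
      exists (pieceR (s m.-1) b); split.
        by move=> x; rewrite /pD /= in_itv /= => /andP[].
      move=> _ m0; split; [exact: (pieceR_good Kcl b0)|exact: pieceR_wf|].
      move=> x; rewrite /pD /= in_itv /= => /andP[sx xb]; apply: (cvx (s m.-1) b) => //.
        by apply: sJ; rewrite prednK.
      by rewrite /= in_itv /= (ltW sx) (ltW xb).
    exists (pieceRinf (s m.-1)); split.
      by move=> x; rewrite /pD /= in_itv /= andbT.
    by move=> /nb.
  have -> : (fun i => tot_var (mp i) (mn i) J) =
            (fun i => (1^-1%:E * tot_var (mp i) (mn i) J)%E).
    by apply: funext => i; rewrite invr1 mul1e.
  pose b (k : nat) : bool :=
    if (k.+1 < m)%N then false else ~~ `[< exists b, J b /\ (s m.-1 < b)%O >].
  pose P (k : 'I_m) := fam m s U BL BR (val k, b (val k)).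
  have Pok : forall k : 'I_m, ok (s (val k)) (P k).
    move=> [k km]; rewrite /P /fam /b /=.
    have [k1m|k1m] := boolP (k.+1 < m)%N.
      have [g w sub] := rgt_ok k0 Kcl BR HU k1m.
      by split => // x /sub; apply: cvx; apply: sJ => //; apply: ltnW.
    have ek : k = m.-1 by move: km k1m; rewrite -leqNgt; lia.
    have m0 : (0 < m)%N by move: km; lia.
    have [Bex|Bnex] := pselect (exists b, J b /\ (s m.-1 < b)%O).
      rewrite asboolT //=.
      have -> : rgt m s U BR k = BR by rewrite /rgt (negbTE k1m).
      by rewrite ek; apply: BRok.
    rewrite asboolF //=.
    case: k km k1m ek => [|k] km k1m ek.
      apply: BLok => //.
      have s0 : forall t, J t -> (t <= s 0)%O.
        move=> t Jt; rewrite leNgt; apply/negP => st; apply: Bnex; exists t.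
        by rewrite -ek.
      have [e1|n1] := eqVneq t1 (s 0).
        exists t2; split => //; rewrite lt_neqAle s0 // andbT.
        by apply/eqP => e2; apply: t12; rewrite e1 e2.
      by exists t1; split => //; rewrite lt_neqAle n1 s0.
    have [g w sub] := lft_ok k0 Kcl BL HU (ltn0Sn k) km.
    by split => // x /sub; apply: cvx; apply: sJ => //; apply: ltnW.
  apply: (@assemble R d K k0 I mp mn wnull J S 1 _ P).
  - by rewrite ltr01.
  - exact: mJ.
  - by move=> p; have [_ w _] := Pok p.
  - by move=> p; have [_ _ sub] := Pok p.
  - move=> p q pq; apply: (fam_disj s_lt HU BLreg BRreg) => /=; [exact: ltn_ord|exact: ltn_ord|].
    apply: contra pq => /eqP [e1 _]; apply/eqP; exact: val_inj.
  - move=> i; rewrite sumE mul1r; exact: (okE _ P (fun k => s (val k))).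
move=> oJ.
have [BL [BLreg BLok]] : exists BL : @piece R d K, (forall x, pD BL x -> (x <= s 0)%O) /\
    ((0 < m)%N -> ok (s 0) BL).
  have [[a [a0 aJ]]|na] := pselect (exists a, (a < s 0)%O /\ `]a, s 0]%classic `<=` J).
    exists (pieceL a (s 0)); split.
      by move=> x; rewrite /pD /= in_itv /= => /andP[].
    by move=> _; split; [exact: (pieceL_good Kcl a0)|exact: pieceL_wf|].
  exists (pieceLinf (s 0)); split.
    by move=> x; rewrite /pD /= in_itv /=.
  move=> m0; split; [exact: pieceLinf_good|exact: pieceLinf_wf|].
  by have [//|] := open_lower oJ (sJ 0%N m0).
have [BR [BRreg BRok]] : exists BR : @piece R d K, (forall x, pD BR x -> (s m.-1 < x)%O) /\
    ((0 < m)%N -> ok (s m.-1) BR).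
  have [[b [b0 bJ]]|nb] := pselect (exists b, (s m.-1 < b)%O /\ `]s m.-1, b[%classic `<=` J).
    exists (pieceR (s m.-1) b); split.
      by move=> x; rewrite /pD /= in_itv /= => /andP[].
    by move=> _; split; [exact: (pieceR_good Kcl b0)|exact: pieceR_wf|].
  exists (pieceRinf (s m.-1)); split.
    by move=> x; rewrite /pD /= in_itv /= andbT.
  move=> m0; split; [exact: pieceRinf_good|exact: pieceRinf_wf|].
  have m1 : (m.-1 < m)%N by rewrite prednK.
  by have [//|] := open_upper oJ (sJ _ m1).
pose P (p : 'I_m * bool) := fam m s U BL BR (val p.1, p.2).
have Pok : forall p : 'I_m * bool, ok (s (val p.1)) (P p).
  move=> [[k km] []]; rewrite /P /fam /=.
    case: k km => [|k] km; first exact: BLok.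
    have [g w sub] := lft_ok k0 Kcl BL HU (ltn0Sn k) km.
    by split => // x /sub; apply: cvx; apply: sJ => //; apply: ltnW.
  have [k1m|k1m] := boolP (k.+1 < m)%N.
    have [g w sub] := rgt_ok k0 Kcl BR HU k1m.
    by split => // x /sub; apply: cvx; apply: sJ => //; apply: ltnW.
  have ek : k = m.-1 by move: km k1m; rewrite -leqNgt; lia.
  have -> : rgt m s U BR k = BR by rewrite /rgt (negbTE k1m).
  rewrite ek; apply: BRok; move: km; lia.
apply: (@assemble R d K k0 I mp mn wnull J S 2 _ P).
- by rewrite ltr0n.
- exact: mJ.
- by move=> p; have [_ w _] := Pok p.
- by move=> p; have [_ _ sub] := Pok p.
- move=> p q pq; apply: (fam_disj s_lt HU BLreg BRreg) => /=; [exact: ltn_ord|exact: ltn_ord|].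
  apply: contra pq => /eqP [e1 e2]; apply/eqP.
  by case: p q e1 e2 => [p1 p2] [q1 q2] /= e1 e2; congr pair => //; apply: val_inj.
- move=> i; rewrite sumE mulr_sumr.
  set G := fun x : 'I_m * bool => `|sm_integral (mp i) (mn i) (pf (P x))| +
     `|Im (mp i) (mn i) (pD (P x)) (ph (P x))|.
  rewrite -/(\sum_(x : 'I_m * bool) G x).
  rewrite (eq_bigr (fun x => G (x.1, x.2))); last by case.
  rewrite -(pair_bigA _ (fun k b => G (k, b))) /=; apply: ler_sum => k _.
  rewrite big_bool /= mulr2n mulrDl mul1r.
  have [g1 _ _] := Pok (k, true); have [g2 _ _] := Pok (k, false).
  by apply: lerD; [exact: g1|exact: g2].
Qed.
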